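(* For every metrizable space $X$, the set $AM(X)$ of bounded admissible metrics on $X$ is dense in the space $PM(X)$ of continuous bounded pseudometrics on $X$, where $PM(X)$ carries the topology of uniform convergence (induced by the sup-metric $D(f,g) = \sup_{(x,y) \in X^2}|f(x,y) - g(x,y)|$).
   Context: A pseudometric on $X$ is continuous if it is continuous as a function $X^2 \to \mathbb{R}$; a metric on $X$ is admissible if it induces the topology of $X$. Both $PM(X)$ and $AM(X)$ are regarded as subspaces of the space $C(X^2)$ of continuous bounded real-valued functions on $X^2$ with the uniform convergence topology. *)

(* Defs.v *)
From HB Require Import structures.
From mathcomp Require Import all_boot all_order all_algebra.
From mathcomp Require Import all_classical all_reals topology normedtype.
Set Implicit Arguments. Unset Strict Implicit. Unset Printing Implicit Defensive.
Import Order.TTheory GRing.Theory Num.Theory.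
Import numFieldNormedType.Exports.
Local Open Scope classical_set_scope.
Local Open Scope ring_scope.

Section Defs.
Variables (R : realType) (X : topologicalType).

Definition is_pseudometric (d : X -> X -> R) : Prop :=
  [/\ forall x, d x x = 0,
      forall x y, 0 <= d x y,
      forall x y, d x y = d y x &
      forall x y z, d x z <= d x y + d y z].

Definition is_metric (d : X -> X -> R) : Prop :=
  is_pseudometric d /\ (forall x y, d x y = 0 -> x = y).

Definition continuous_pm (d : X -> X -> R) : Prop :=
  continuous (fun p : X * X => d p.1 p.2).

Definition bounded_fun2 (d : X -> X -> R) : Prop :=
  exists M : R, forall x y, `|d x y| <= M.

Definition d_open (d : X -> X -> R) (U : set X) : Prop :=
  forall x, U x -> exists2 e : R, 0 < e & [set y | d x y < e] `<=` U.

Definition admissible (d : X -> X -> R) : Prop :=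
  is_metric d /\ (forall U : set X, open U <-> d_open d U).

Definition metrizable : Prop := exists d : X -> X -> R, admissible d.

Definition in_PM (d : X -> X -> R) : Prop :=
  [/\ is_pseudometric d, continuous_pm d & bounded_fun2 d].

(* AM(X): bounded admissible metrics (automatically continuous) *)
Definition in_AM (d : X -> X -> R) : Prop :=
  [/\ admissible d, continuous_pm d & bounded_fun2 d].

End Defs.

(* Main.v *)
Require Import Defs.
From HB Require Import structures.
From mathcomp Require Import all_boot all_order all_algebra.
From mathcomp Require Import all_classical all_reals topology normedtype.
From mathcomp Require Import lra.
Import Order.TTheory GRing.Theory Num.Theory.
Import numFieldNormedType.Exports.
Local Open Scope classical_set_scope.
Local Open Scope ring_scope.

Lemma min1_tri (R : realType) (a b e : R) : 0 <= b -> 0 <= e -> a <= b + e ->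
  Num.min a 1 <= Num.min b 1 + Num.min e 1.
Proof.
move=> b0 e0 h.
case: (leP a 1) => ha; case: (leP b 1) => hb; case: (leP e 1) => he; lra.
Qed.

Lemma min1_lip (R : realType) (u v : R) : `|Num.min u 1 - Num.min v 1| <= `|u - v|.
Proof.
case: (leP u 1) => ha; case: (leP v 1) => hb.
- by [].
- rewrite (ler0_norm (x:=u-1)) ?(ler0_norm (x:=u-v)); lra.
- rewrite (ger0_norm (x:=1-v)) ?(ger0_norm (x:=u-v)); lra.
- rewrite subrr normr0; exact: normr_ge0.
Qed.

Lemma min1_ge0 (R : realType) (u : R) : 0 <= u -> 0 <= Num.min u 1.
Proof. by move=> h; rewrite le_min h ler01. Qed.

Theorem proposition3 (R : realType) (X : topologicalType) :
  metrizable R X ->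
  forall d : X -> X -> R, in_PM d ->
  forall eps : R, 0 < eps ->
  exists rho : X -> X -> R, in_AM rho /\
    exists2 c : R, c < eps & forall x y : X, `|d x y - rho x y| <= c.
Proof.
move=> [m [[[m0 mge0 msym mtri] meq] mopen]] d [[d0 dge0 dsym dtri] dcont [M hM]] eps eps0.
set c := eps / 2.
have c0 : 0 < c by rewrite /c; lra.
set mm := fun x y => Num.min (m x y) 1.
have mmge0 : forall x y, 0 <= mm x y by move=> x y; apply: min1_ge0.
have mmle1 : forall x y, mm x y <= 1 by move=> x y; rewrite /mm ge_min lexx orbT.
have ball_open : forall x e, open [set y | m x y < e].
  move=> x e; apply/mopen => y /= hy; exists (e - m x y); first lra.
  move=> z /= hz; have := mtri x y z; lra.
have ball_nbhs : forall x e, 0 < e -> nbhs x [set y | m x y < e].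
  move=> x e e0; apply: open_nbhs_nbhs; split; first exact: ball_open.
  by rewrite /= m0.
have mmcont : continuous (fun p : X * X => mm p.1 p.2).
  move=> [a b]; apply/cvgrPdist_lt => e e0.
  exists ([set y | m a y < e / 2], [set y | m b y < e / 2]).
    by split; apply: ball_nbhs; lra.
  move=> [q1 q2] [/= h1 h2].
  rewrite /mm /=; apply: (@le_lt_trans _ _ (`|m a b - m q1 q2|)); first exact: min1_lip.
  rewrite ltr_norml.
  have t1 := mtri a q1 b; have t2 := mtri q1 q2 b; have t3 := mtri q1 a q2;
  have t4 := mtri a b q2; have s1 := msym q1 a; have s2 := msym q2 b.
  apply/andP; split; lra.
set rho := fun x y => d x y + c * mm x y.
have rhocont : continuous_pm rho.
  move=> p; rewrite /rho /=.
  apply: (@cvgD _ _ _ _ _ (fun q : X * X => d q.1 q.2) (fun q => c * mm q.1 q.2)).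
    exact: dcont.
  apply: cvgMl_tmp; exact: mmcont.
have rhopm : is_pseudometric rho.
  split.
  - by move=> x; rewrite /rho /mm /= d0 m0 (min_l ler01) mulr0 addr0.
  - move=> x y; rewrite /rho; have := dge0 x y; have := mmge0 x y; nra.
  - by move=> x y; rewrite /rho /mm dsym msym.
  - move=> x y z; rewrite /rho.
    have := dtri x y z.
    have := min1_tri _ _ _ _ (mge0 x y) (mge0 y z) (mtri x y z); rewrite -/(mm x z) -/(mm x y) -/(mm y z).
    nra.
exists rho; split; last first.
  exists c; first by rewrite /c; lra.
  move=> x y; rewrite /rho opprD addrA subrr add0r normrN ger0_norm.
    have := mmle1 x y; nra.
  have := mmge0 x y; nra.
split; [split|by []|].
- split => // x y /eqP; rewrite paddr_eq0 ?(dge0 x y) //; last first.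
    by apply: mulr_ge0; [lra|apply: mmge0].
  case/andP => _; rewrite mulf_eq0 gt_eqF //= /mm => /eqP hmin.
  apply: meq; move: hmin; case: (leP (m x y) 1) => h.
    by [].
  by move=> /eqP; rewrite oner_eq0.
- move=> U; split.
  + move=> /mopen hU x Ux; have [e e0 he] := hU x Ux.
    exists (c * Num.min e 1).
      by apply: mulr_gt0 => //; rewrite lt_min e0 ltr01.
    move=> y /= hy; apply: he => /=.
    have h1 : mm x y < Num.min e 1.
      have := dge0 x y; move: hy; rewrite /rho.
      move=> hy hd. rewrite -(ltr_pM2l c0); lra.
    move: h1; rewrite /mm; case: (leP (m x y) 1) => h.
      by rewrite lt_min => /andP[].
    by rewrite lt_min ltxx andbF.
  + move=> hU; rewrite openE => x Ux; have [r r0 hr] := hU x Ux.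
    rewrite /interior /=; apply: (filterS hr).
    have := rhocont (x, x); move/cvgrPdist_lt => /(_ r r0).
    move=> [[A1 A2] [/= hA1 hA2] hA].
    apply: (filterS _ hA2) => y A2y /=.
    have := hA (x, y) (conj (nbhs_singleton hA1) A2y).
    have [rho0 rhoge0 _ _] := rhopm.
    by rewrite /= rho0 sub0r normrN ger0_norm.
- exists (M + c) => x y; rewrite /rho ger0_norm; last first.
    by apply: addr_ge0 => //; apply: mulr_ge0; [lra|apply: mmge0].
  have := hM x y; rewrite ger0_norm //; have := mmle1 x y; have := mmge0 x y; nra.
Qed.
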